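(* Let $d\ge2$ and let $\mathbf{p}^\star$ be a maximizer of the problem $$\max\Big\{\frac{\prod_{i=1}^dp_i}{D_1(\mathbf{p})^d}\;:\;\mathbf{p}\in(0,\infty)^d,\ p_1=1,\ D_1(\mathbf{p})^2\ge D_j(\mathbf{p})^2\text{ for all }j\in\{2,\dots,d\}\Big\}.$$ Then $\mathbf{p}^\star$ is a solution of the Karush–Kuhn–Tucker system below with multipliers $(\mu_2,\dots,\mu_d)\neq\mathbf{0}$, i.e. there exists $k\in\{2,\dots,d\}$ with $\mu_k>0$.
   Context: For $k\in\{1,\dots,d\}$ let $w_{k,i}=0$ for $i<k$, $w_{k,k}=k$, $w_{k,i}=i-1$ for $k<i\le d$, and $D_k(\mathbf{p})=\sqrt{\sum_{i=1}^dw_{k,i}^2p_i^2}$. Let $F_1(p_2,\dots,p_d)=\prod_{i=2}^dp_i/D_1(1,p_2,\dots,p_d)^d$, and regard $D_k$ as functions of $(p_2,\dots,p_d)$ with $p_1=1$. The Karush–Kuhn–Tucker system is: for all $j\in\{2,\dots,d\}$, $$\frac{\partial F_1}{\partial p_j}(\mathbf{p})=\sum_{i=2}^d\mu_i\frac{\partial}{\partial p_j}\big(D_i(\mathbf{p})^2-D_1(\mathbf{p})^2\big),\qquad \mu_j\big(D_j(\mathbf{p})^2-D_1(\mathbf{p})^2\big)=0,\qquad \mu_j\ge0,\qquad D_j(\mathbf{p})\le D_1(\mathbf{p}).$$ *)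

(* Defs.v *)
From Stdlib Require Import Reals Arith.
From Coquelicot Require Import Coquelicot.
Open Scope R_scope.

Fixpoint sumR (f : nat -> R) (m k : nat) : R :=
  match k with O => 0 | S k' => f m + sumR f (S m) k' end.

Fixpoint prodR (f : nat -> R) (m k : nat) : R :=
  match k with O => 1 | S k' => f m * prodR f (S m) k' end.

Definition w (k i : nat) : R :=
  if (i <? k)%nat then 0 else if (i =? k)%nat then INR k else INR (i - 1).

(* D_k(p) = sqrt(sum_{i=1}^d w_{k,i}^2 p_i^2); vectors are p : nat -> R, indices 1..d. *)
Definition D (d k : nat) (p : nat -> R) : R :=
  sqrt (sumR (fun i => (w k i) ^ 2 * (p i) ^ 2) 1 d).

Definition F1 (d : nat) (p : nat -> R) : R :=
  prodR p 2 (d - 1) / (D d 1 p) ^ d.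

Definition upd (p : nat -> R) (j : nat) (t : R) : nat -> R :=
  fun i => if (i =? j)%nat then t else p i.

Definition partial (G : (nat -> R) -> R) (j : nat) (p : nat -> R) : R :=
  Derive (fun t => G (upd p j t)) (p j).

Definition feasible (d : nat) (p : nat -> R) : Prop :=
  (forall i, (1 <= i <= d)%nat -> 0 < p i) /\ p 1%nat = 1 /\
  (forall j, (2 <= j <= d)%nat -> (D d j p) ^ 2 <= (D d 1 p) ^ 2).

Definition is_maximizer (d : nat) (p : nat -> R) : Prop :=
  feasible d p /\ forall q, feasible d q -> F1 d q <= F1 d p.

Definition KKT (d : nat) (p mu : nat -> R) : Prop :=
  forall j, (2 <= j <= d)%nat ->
    partial (F1 d) j p =
      sumR (fun i => mu i *
              partial (fun q => (D d i q) ^ 2 - (D d 1 q) ^ 2) j p) 2 (d - 1)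
    /\ mu j * ((D d j p) ^ 2 - (D d 1 p) ^ 2) = 0
    /\ 0 <= mu j
    /\ D d j p <= D d 1 p.

(* Main.v *)
Require Import Defs.
From Stdlib Require Import Reals Arith Lra Lia Psatz.
From Coquelicot Require Import Coquelicot.
Open Scope R_scope.

Lemma sumR_S f m k : sumR f m (S k) = sumR f m k + f (m + k)%nat.
Proof.
  revert m; induction k as [|k IH]; intro m.
  - simpl. rewrite Nat.add_0_r; ring.
  - change (sumR f m (S (S k))) with (f m + sumR f (S m) (S k)).
    rewrite IH. replace (S m + k)%nat with (m + S k)%nat by lia. simpl. ring.
Qed.

Lemma prodR_S f m k : prodR f m (S k) = prodR f m k * f (m + k)%nat.
Proof.
  revert m; induction k as [|k IH]; intro m.
  - simpl. rewrite Nat.add_0_r; ring.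
  - change (prodR f m (S (S k))) with (f m * prodR f (S m) (S k)).
    rewrite IH. replace (S m + k)%nat with (m + S k)%nat by lia. simpl. ring.
Qed.

Lemma sumR_ext f g m k : (forall i, (m <= i < m + k)%nat -> f i = g i) ->
  sumR f m k = sumR g m k.
Proof.
  revert m; induction k as [|k IH]; intros m H; simpl; auto.
  rewrite H by lia. rewrite (IH (S m)) by (intros; apply H; lia). auto.
Qed.

Lemma prodR_ext f g m k : (forall i, (m <= i < m + k)%nat -> f i = g i) ->
  prodR f m k = prodR g m k.
Proof.
  revert m; induction k as [|k IH]; intros m H; simpl; auto.
  rewrite H by lia. rewrite (IH (S m)) by (intros; apply H; lia). auto.
Qed.

Lemma sumR_nonneg f m k : (forall i, (m <= i < m + k)%nat -> 0 <= f i) ->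
  0 <= sumR f m k.
Proof.
  revert m; induction k as [|k IH]; intros m H; simpl; [lra|].
  assert (0 <= f m) by (apply H; lia).
  assert (0 <= sumR f (S m) k) by (apply IH; intros; apply H; lia). lra.
Qed.

Lemma sumR_zero f m k : (forall i, (m <= i < m + k)%nat -> f i = 0) ->
  sumR f m k = 0.
Proof.
  revert m; induction k as [|k IH]; intros m H; simpl; [lra|].
  rewrite H by lia. rewrite IH by (intros; apply H; lia). ring.
Qed.

Lemma prodR_pos f m k : (forall i, (m <= i < m + k)%nat -> 0 < f i) ->
  0 < prodR f m k.
Proof.
  revert m; induction k as [|k IH]; intros m H; simpl; [lra|].
  apply Rmult_lt_0_compat; [apply H; lia| apply IH; intros; apply H; lia].
Qed.

Lemma prodR_sq f m k : prodR f m k ^ 2 = prodR (fun i => f i ^ 2) m k.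
Proof.
  revert m; induction k as [|k IH]; intros m; simpl; [ring|].
  rewrite <- IH. ring.
Qed.

Lemma prodR_le f g m k :
  (forall i, (m <= i < m + k)%nat -> 0 < f i <= g i) ->
  prodR f m k <= prodR g m k.
Proof.
  revert m; induction k as [|k IH]; intros m H; simpl; [lra|].
  assert (0 < f m <= g m) by (apply H; lia).
  assert (0 < prodR f (S m) k) by (apply prodR_pos; intros; apply H; lia).
  assert (prodR f (S m) k <= prodR g (S m) k) by (apply IH; intros; apply H; lia).
  nra.
Qed.

Lemma prodR_eq f g m k :
  (forall i, (m <= i < m + k)%nat -> 0 < f i <= g i) ->
  prodR g m k <= prodR f m k ->
  forall i, (m <= i < m + k)%nat -> f i = g i.
Proof.
  revert m; induction k as [|k IH]; intros m H Hp i Hi; [lia|].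
  simpl in Hp.
  assert (Hm : 0 < f m <= g m) by (apply H; lia).
  assert (HF : 0 < prodR f (S m) k) by (apply prodR_pos; intros; apply H; lia).
  assert (HFG : prodR f (S m) k <= prodR g (S m) k)
    by (apply prodR_le; intros; apply H; lia).
  assert (Hfm : f m = g m) by nra.
  assert (Hr : prodR g (S m) k <= prodR f (S m) k) by nra.
  destruct (Nat.eq_dec i m) as [->|]; auto.
  apply (IH (S m)); auto; [intros; apply H; lia | lia].
Qed.

Lemma bern m u : -1 <= u -> 1 + INR m * u <= (1 + u) ^ m.
Proof.
  intro Hu; induction m as [|m IH]; [simpl; lra|].
  rewrite S_INR. change ((1+u)^(S m)) with ((1+u)*(1+u)^m). assert (0 <= INR m) by apply pos_INR. nra.
Qed.

Lemma bern_strict m u : (1 <= m)%nat -> -1 < u -> u <> 0 ->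
  1 + INR (S m) * u < (1 + u) ^ (S m).
Proof.
  intros Hm Hu Hu0. change ((1+u)^(S m)) with ((1+u) * (1+u)^m).
  assert (H1 := bern m u ltac:(lra)).
  assert (1 <= INR m) by (apply (le_INR 1); lia).
  rewrite S_INR. assert (0 < u*u) by (apply Rsqr_pos_lt in Hu0; unfold Rsqr in Hu0; lra).
  nra.
Qed.


Lemma key_gen m X a : (1 <= m)%nat -> 0 < X -> 0 < a ->
  (INR (S m) ^ (S m) * (a * X ^ m) <= INR m ^ m * (X + a) ^ (S m)) /\
  (INR m * a <> X -> INR (S m) ^ (S m) * (a * X ^ m) < INR m ^ m * (X + a) ^ (S m)).
Proof.
  intros Hm HX Ha.
  assert (HM : 1 <= INR m) by (apply (le_INR 1); lia).
  set (M := INR m) in *. assert (HN : INR (S m) = M + 1) by (rewrite S_INR; reflexivity).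
  rewrite HN. set (u := (M * a - X) / ((M+1) * X)).
  assert (Hu1 : 1 + u = (M * (X + a)) * / ((M+1) * X)) by (unfold u; field; lra).
  assert (HE : (1 + u) ^ (S m) * ((M+1) ^ (S m) * X ^ (S m)) = M ^ (S m) * (X + a) ^ (S m)).
  { rewrite Hu1, Rpow_mult_distr, pow_inv, Rpow_mult_distr, Rpow_mult_distr.
    field. split; apply pow_nonzero; lra. }
  assert (HL : 1 + INR (S m) * u = M * a / X) by (rewrite HN; unfold u; field; lra).
  assert (Hpos : 0 < (M+1) ^ (S m) * X ^ (S m)) by (apply Rmult_lt_0_compat; apply pow_lt; lra).
  assert (Hx : M * a / X * ((M+1) ^ (S m) * X ^ (S m)) = M * ((M+1) ^ (S m) * (a * X ^ m))).
  { simpl pow. field. lra. }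
  assert (HMs : M ^ (S m) * (X + a) ^ (S m) = M * (M ^ m * (X + a) ^ (S m))) by (simpl; ring).
  assert (Hgt : 1 + u > 0).
  { rewrite Hu1. assert (0 < M * (X + a) * / ((M + 1) * X)).
    { apply Rmult_lt_0_compat; [nra| apply Rinv_0_lt_compat; nra]. } lra. }
  split.
  - assert (H := bern (S m) u ltac:(lra)).
    rewrite HL in H. apply (Rmult_le_compat_r _ _ _ (Rlt_le _ _ Hpos)) in H.
    rewrite HE, Hx, HMs in H. apply Rmult_le_reg_l in H; lra.
  - intro Hne. assert (Hu0 : u <> 0).
    { unfold u. intro Hz. apply Hne. unfold Rdiv in Hz.
      apply Rmult_integral in Hz. destruct Hz as [Hz|Hz]; [lra|].
      exfalso; revert Hz; apply Rinv_neq_0_compat; nra. }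
    assert (H := bern_strict m u Hm ltac:(lra) Hu0).
    rewrite HL in H. apply (Rmult_lt_compat_r _ _ _ Hpos) in H.
    rewrite HE, Hx, HMs in H. apply Rmult_lt_reg_l in H; lra.
Qed.

Lemma abs_bound2 X a : 0 < X -> 0 < a -> 3 * a <= X ->
  a * X / (X + a) ^ 2 <= 3 / 16 /\
  (a * X / (X + a) ^ 2 = 3 / 16 -> X = 3 * a) /\
  (X = 3 * a -> a * X / (X + a) ^ 2 = 3 / 16).
Proof.
  intros HX Ha H3.
  assert (Hp : 0 < (X + a) ^ 2) by (apply pow_lt; lra).
  split; [|split].
  - apply (Rmult_le_reg_r ((X+a)^2)); auto. unfold Rdiv.
    rewrite Rmult_assoc, Rinv_l by lra. nra.
  - intro He. assert (E : a * X = 3/16 * (X+a)^2).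
    { rewrite <- He. field. lra. } nra.
  - intros ->. field. lra.
Qed.

Lemma abs_boundm m X a : (1 <= m)%nat -> 0 < X -> 0 < a ->
  a / INR m ^ 2 * X ^ m / (X + a) ^ (S m) <= INR m ^ m / (INR m ^ 2 * INR (S m) ^ (S m)) /\
  (a / INR m ^ 2 * X ^ m / (X + a) ^ (S m) = INR m ^ m / (INR m ^ 2 * INR (S m) ^ (S m)) -> X = INR m * a) /\
  (X = INR m * a -> a / INR m ^ 2 * X ^ m / (X + a) ^ (S m) = INR m ^ m / (INR m ^ 2 * INR (S m) ^ (S m))).
Proof.
  intros Hm HX Ha.
  assert (HM : 1 <= INR m) by (apply (le_INR 1); lia).
  destruct (key_gen m X a Hm HX Ha) as [H1 H2].
  assert (Hp : 0 < (X + a) ^ (S m)) by (apply pow_lt; lra).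
  assert (HN : 0 < INR (S m) ^ (S m)) by (apply pow_lt; rewrite S_INR; lra).
  assert (HM2 : 0 < INR m ^ 2) by (apply pow_lt; lra).
  assert (Eq2 : a / INR m ^ 2 * X ^ m / (X + a) ^ (S m) - INR m ^ m / (INR m ^ 2 * INR (S m) ^ (S m))
     = (INR (S m) ^ (S m) * (a * X ^ m) - INR m ^ m * (X + a) ^ (S m)) / (INR m ^ 2 * INR (S m) ^ (S m) * (X + a) ^ (S m))).
  { field. repeat split; lra. }
  assert (Hden : 0 < INR m ^ 2 * INR (S m) ^ (S m) * (X + a) ^ (S m)) by
    (apply Rmult_lt_0_compat; [apply Rmult_lt_0_compat|]; auto).
  split; [|split].
  - assert (0 >= (INR (S m) ^ (S m) * (a * X ^ m) - INR m ^ m * (X + a) ^ (S m)) / (INR m ^ 2 * INR (S m) ^ (S m) * (X + a) ^ (S m))).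
    { unfold Rdiv. assert (0 < / (INR m ^ 2 * INR (S m) ^ (S m) * (X + a) ^ (S m))) by (apply Rinv_0_lt_compat; auto). nra. }
    lra.
  - intro He. destruct (Req_dec (INR m * a) X) as [E|E]; auto.
    specialize (H2 E).
    assert (0 > (INR (S m) ^ (S m) * (a * X ^ m) - INR m ^ m * (X + a) ^ (S m)) / (INR m ^ 2 * INR (S m) ^ (S m) * (X + a) ^ (S m))).
    { unfold Rdiv. assert (0 < / (INR m ^ 2 * INR (S m) ^ (S m) * (X + a) ^ (S m))) by (apply Rinv_0_lt_compat; auto). nra. }
    lra.
  - intros ->. rewrite S_INR. simpl pow. rewrite Rpow_mult_distr.
    replace (INR m * a + a) with ((INR m + 1) * a) by ring.
    rewrite Rpow_mult_distr. field. repeat split; try lra; apply pow_nonzero; lra.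
Qed.


Lemma w_lt k i : (i < k)%nat -> w k i = 0.
Proof. intro H; unfold w. destruct (Nat.ltb_spec i k); [auto|lia]. Qed.
Lemma w_eq k : w k k = INR k.
Proof. unfold w. destruct (Nat.ltb_spec k k); [lia|]. rewrite Nat.eqb_refl; auto. Qed.
Lemma w_gt k i : (k < i)%nat -> w k i = INR (i - 1).
Proof. intro H; unfold w. destruct (Nat.ltb_spec i k); [lia|].
  destruct (Nat.eqb_spec i k); [lia|auto]. Qed.

Definition T (q : nat -> R) (n : nat) : R := sumR (fun i => w 1 i ^ 2 * q i ^ 2) 1 n.

Lemma T_S q n : T q (S n) = T q n + w 1 (S n) ^ 2 * q (S n) ^ 2.
Proof. unfold T. rewrite sumR_S. reflexivity. Qed.

Lemma T_S' q n : (1 <= n)%nat -> T q (S n) = T q n + INR n ^ 2 * q (S n) ^ 2.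
Proof. intro H. rewrite T_S, w_gt by lia. replace (S n - 1)%nat with n by lia. auto. Qed.

Lemma T_1 q : T q 1 = q 1%nat ^ 2.
Proof. unfold T; simpl. rewrite w_eq. simpl. ring. Qed.

Lemma T_ge1 q n : q 1%nat = 1 -> (1 <= n)%nat -> 1 <= T q n.
Proof.
  intros H1 Hn. induction n as [|n IH]; [lia|].
  destruct (Nat.eq_dec n 0) as [->|]. { rewrite T_1, H1. lra. }
  rewrite T_S. assert (0 <= w 1 (S n) ^ 2 * q (S n) ^ 2).
  { apply Rmult_le_pos; apply pow2_ge_0. }
  specialize (IH ltac:(lia)). lra.
Qed.

Lemma D1_sq d q : Defs.D d 1 q ^ 2 = T q d.
Proof. unfold Defs.D. rewrite pow2_sqrt; [reflexivity|].
  apply sumR_nonneg; intros; apply Rmult_le_pos; apply pow2_ge_0. Qed.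

Lemma Dj_sum q j n : (2 <= j)%nat ->
  sumR (fun i => w j i ^ 2 * q i ^ 2) 1 n =
  if (n <? j)%nat then 0 else T q n - T q j + INR j ^ 2 * q j ^ 2.
Proof.
  intro Hj. induction n as [|n IH].
  - simpl. destruct (Nat.ltb_spec 0 j); [auto|lia].
  - rewrite sumR_S, IH. replace (1 + n)%nat with (S n) by lia.
    destruct (Nat.ltb_spec (S n) j).
    + destruct (Nat.ltb_spec n j); [|lia]. rewrite w_lt by lia. ring.
    + destruct (Nat.eq_dec (S n) j) as [E|E].
      * destruct (Nat.ltb_spec n j); [|lia]. subst j. rewrite w_eq. ring.
      * destruct (Nat.ltb_spec n j); [lia|]. rewrite T_S, w_gt, w_gt by lia. ring.
Qed.

Lemma Dj_sq d q j : (2 <= j <= d)%nat ->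
  Defs.D d j q ^ 2 = T q d - T q j + INR j ^ 2 * q j ^ 2.
Proof.
  intro H. unfold Defs.D. rewrite pow2_sqrt.
  - rewrite Dj_sum by lia. destruct (Nat.ltb_spec d j); [lia|auto].
  - apply sumR_nonneg; intros; apply Rmult_le_pos; apply pow2_ge_0.
Qed.

Lemma constr_iff d q j : (2 <= j <= d)%nat ->
  (Defs.D d j q ^ 2 <= Defs.D d 1 q ^ 2 <-> INR j ^ 2 * q j ^ 2 <= T q j).
Proof. intro H. rewrite Dj_sq, D1_sq by lia. split; intro; lra. Qed.

Definition tk (q : nat -> R) (k : nat) : R :=
  q k ^ 2 * T q (pred k) ^ (pred k) / T q k ^ k.

Lemma decomp q m : q 1%nat = 1 ->
  prodR (fun i => q i ^ 2) 2 m / T q (S m) ^ (S m) = prodR (tk q) 2 m.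
Proof.
  intro H1. induction m as [|m IH].
  - simpl. rewrite T_1, H1. field.
  - rewrite !prodR_S, <- IH. replace (2 + m)%nat with (S (S m)) by lia.
    unfold tk. simpl pred.
    assert (A1 := T_ge1 q (S m) H1 ltac:(lia)).
    assert (A2 := T_ge1 q (S (S m)) H1 ltac:(lia)).
    field. split; apply pow_nonzero; lra.
Qed.

Lemma F1_sq d q : F1 d q ^ 2 = prodR (fun i => q i ^ 2) 2 (d - 1) / T q d ^ d.
Proof.
  unfold F1, Defs.D. fold (T q d).
  assert (HT : 0 <= T q d) by (apply sumR_nonneg; intros; apply Rmult_le_pos; apply pow2_ge_0).
  rewrite <- prodR_sq. unfold Rdiv. rewrite Rpow_mult_distr, pow_inv.
  rewrite <- pow_mult, Nat.mul_comm, pow_mult, pow2_sqrt by auto. reflexivity.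
Qed.

Definition cond (q : nat -> R) (k : nat) : Prop :=
  T q (pred k) = (if (k =? 2)%nat then 3 else INR (pred k)) * (INR (pred k) ^ 2 * q k ^ 2).
Definition Bk (k : nat) : R :=
  if (k =? 2)%nat then 3 / 16 else INR (pred k) ^ (pred k) / (INR (pred k) ^ 2 * INR k ^ k).

Lemma tk_props q k : q 1%nat = 1 -> (2 <= k)%nat -> 0 < q k ->
  (k = 2%nat -> INR 2 ^ 2 * q 2%nat ^ 2 <= T q 2) ->
  0 < tk q k /\ tk q k <= Bk k /\ (tk q k = Bk k -> cond q k) /\ (cond q k -> tk q k = Bk k).
Proof.
  intros H1 Hk Hq Hc.
  destruct k as [|m]; [lia|].
  assert (Hm : (1 <= m)%nat) by lia.
  assert (HM : 1 <= INR m) by (apply (le_INR 1); lia).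
  set (a := INR m ^ 2 * q (S m) ^ 2).
  assert (Ha : 0 < a) by (unfold a; apply Rmult_lt_0_compat; apply pow_lt; lra).
  assert (HX : 1 <= T q m) by (apply T_ge1; auto).
  assert (E : tk q (S m) = a / INR m ^ 2 * T q m ^ m / (T q m + a) ^ (S m)).
  { unfold tk. simpl pred. rewrite T_S' by lia. fold a. unfold a. field.
    assert (0 < q (S m) ^ 2) by (apply pow_lt; lra).
    repeat split; try lra; try (apply pow_nonzero; lra). apply pow_nonzero. nra. }
  unfold cond, Bk. simpl pred. rewrite E.
  destruct (Nat.eq_dec m 1) as [->|Hne].
  - simpl Nat.eqb. cbv iota.
    assert (Hc' : 3 * a <= T q 1).
    { specialize (Hc eq_refl). rewrite T_S' in Hc by lia. unfold a in *. simpl INR in *. lra. }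
    replace (a / INR 1 ^ 2 * T q 1 ^ 1 / (T q 1 + a) ^ 2) with (a * T q 1 / (T q 1 + a) ^ 2)
      by (simpl; field; nra).
    destruct (abs_bound2 (T q 1) a ltac:(lra) Ha Hc') as [B1 [B2 B3]].
    fold a. split; [|split; [auto|split]].
    + apply Rdiv_lt_0_compat; [nra| apply pow_lt; lra].
    + intro H; rewrite (B2 H); ring.
    + intro H; apply B3; rewrite H; ring.
  - replace (S m =? 2)%nat with false by (symmetry; apply Nat.eqb_neq; lia).
    destruct (abs_boundm m (T q m) a Hm ltac:(lra) Ha) as [B1 [B2 B3]].
    fold a. split; [|split; [auto|split]].
    + apply Rdiv_lt_0_compat; [| apply pow_lt; lra].
      apply Rmult_lt_0_compat; [apply Rdiv_lt_0_compat; [auto| apply pow_lt; lra]| apply pow_lt; lra].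
    + intro H; apply B2; auto.
    + intro H; apply B3; auto.
Qed.

Definition p0 (i : nat) : R :=
  if (i =? 1)%nat then 1 else if (i =? 2)%nat then / sqrt 3 else sqrt (2/3) / INR (i - 1).

Lemma p0_a i : (3 <= i)%nat -> INR (i - 1) ^ 2 * p0 i ^ 2 = 2 / 3.
Proof.
  intro H. unfold p0. replace (i =? 1)%nat with false by (symmetry; apply Nat.eqb_neq; lia).
  replace (i =? 2)%nat with false by (symmetry; apply Nat.eqb_neq; lia).
  assert (1 <= INR (i - 1)) by (apply (le_INR 1); lia).
  unfold Rdiv. rewrite Rpow_mult_distr, pow2_sqrt by lra. rewrite pow_inv. field. lra.
Qed.

Lemma p0_2 : p0 2%nat ^ 2 = 1 / 3.
Proof. unfold p0. simpl Nat.eqb. cbv iota. rewrite pow_inv, pow2_sqrt by lra. field. Qed.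

Lemma p0_pos i : (1 <= i)%nat -> 0 < p0 i.
Proof.
  intro Hi. unfold p0. destruct (Nat.eqb_spec i 1); [lra|]. destruct (i =? 2)%nat.
  - apply Rinv_0_lt_compat, sqrt_lt_R0; lra.
  - assert (1 <= INR (i - 1)) by (apply (le_INR 1); lia).
    apply Rdiv_lt_0_compat; [apply sqrt_lt_R0|]; lra.
Qed.

Lemma T_vals q n : q 1%nat = 1 -> (2 <= n)%nat -> q 2%nat ^ 2 = 1/3 ->
  (forall i, (3 <= i <= n)%nat -> INR (i - 1) ^ 2 * q i ^ 2 = 2/3) ->
  T q n = 2 * INR n / 3.
Proof.
  intros H1 Hn H2 Hi. induction n as [|n IH]; [lia|].
  destruct (Nat.eq_dec n 1) as [->|Hne].
  - rewrite T_S' by lia. rewrite T_1, H1, H2. simpl. field.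
  - rewrite T_S' by lia. rewrite IH by (try lia; intros; apply Hi; lia).
    specialize (Hi (S n) ltac:(lia)). replace (S n - 1)%nat with n in Hi by lia.
    rewrite Hi, S_INR. field.
Qed.

Lemma T_p0 n : (2 <= n)%nat -> T p0 n = 2 * INR n / 3.
Proof.
  intro H. apply T_vals; auto; [apply p0_2| intros; apply p0_a; lia].
Qed.

Lemma p0_feasible d : (2 <= d)%nat -> feasible d p0.
Proof.
  intro Hd. split; [|split].
  - intros; apply p0_pos; lia.
  - reflexivity.
  - intros j Hj. apply constr_iff; auto.
    destruct (Nat.eq_dec j 2) as [->|Hne].
    + rewrite p0_2, T_p0 by lia. simpl. lra.
    + rewrite T_p0 by lia.
      assert (E := p0_a j ltac:(lia)).
      assert (HJ := le_INR 3 j ltac:(lia)); simpl INR in HJ.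
      rewrite minus_INR in E by lia. simpl INR in E.
      assert (0 <= p0 j ^ 2) by apply pow2_ge_0.
      assert (Hp : p0 j ^ 2 = 2/3 / (INR j - 1) ^ 2) by (rewrite <- E; field; lra).
      rewrite Hp. apply (Rmult_le_reg_r ((INR j - 1)^2)); [nra|].
      unfold Rdiv. field_simplify; [|lra]. nra.
Qed.

Lemma p0_cond k : (2 <= k)%nat -> cond p0 k.
Proof.
  intro Hk. unfold cond. destruct (Nat.eqb_spec k 2) as [->|Hne].
  - simpl pred. rewrite T_1, p0_2. simpl Nat.eqb. cbv iota. replace (p0 1%nat) with 1 by reflexivity. simpl. field.
  - rewrite T_p0 by lia. replace (pred k) with (k - 1)%nat by lia.
    rewrite p0_a by lia. field.
Qed.

Lemma star_vals q d : q 1%nat = 1 -> (2 <= d)%nat -> (forall k, (2 <= k <= d)%nat -> cond q k) ->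
  q 2%nat ^ 2 = 1/3 /\ (forall i, (3 <= i <= d)%nat -> INR (i - 1) ^ 2 * q i ^ 2 = 2/3).
Proof.
  intros H1 Hd Hc.
  assert (H2 : q 2%nat ^ 2 = 1/3).
  { specialize (Hc 2%nat ltac:(lia)). unfold cond in Hc. simpl pred in Hc.
    rewrite T_1, H1 in Hc. simpl in Hc. lra. }
  split; auto.
  assert (G : forall n, (2 <= n <= d)%nat -> forall i, (3 <= i <= n)%nat -> INR (i - 1) ^ 2 * q i ^ 2 = 2/3).
  { induction n as [|n IH]; intros Hn i Hi; [lia|].
    destruct (Nat.eq_dec i (S n)) as [->|Hne]; [|apply IH; lia].
    assert (HT : T q n = 2 * INR n / 3) by (apply T_vals; auto; [lia| intros; apply IH; lia]).
    specialize (Hc (S n) ltac:(lia)). unfold cond in Hc. simpl pred in Hc.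
    replace (S n =? 2)%nat with false in Hc by (symmetry; apply Nat.eqb_neq; lia).
    replace (S n - 1)%nat with n by lia.
    assert (1 <= INR n) by (apply (le_INR 1); lia). rewrite HT in Hc.
    apply (Rmult_eq_reg_l (INR n)); [|lra]. rewrite <- Hc. field. }
  intros i Hi. apply (G d); lia.
Qed.

Lemma F1_pos d q : (2 <= d)%nat -> feasible d q -> 0 < F1 d q.
Proof.
  intros Hd [Hp [H1 _]]. unfold F1. apply Rdiv_lt_0_compat.
  - apply prodR_pos. intros; apply Hp; lia.
  - apply pow_lt. unfold Defs.D. fold (T q d). apply sqrt_lt_R0.
    assert (1 <= T q d) by (apply T_ge1; auto; lia). lra.
Qed.

Lemma all_cond d p : (2 <= d)%nat -> is_maximizer d p -> forall k, (2 <= k <= d)%nat -> cond p k.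
Proof.
  intros Hd [Hf Hmax] k Hk.
  assert (Hf0 := p0_feasible d Hd).
  assert (Hle := Hmax p0 Hf0).
  assert (P0 := F1_pos d p0 Hd Hf0). assert (P1 := F1_pos d p Hd Hf).
  assert (Hsq : F1 d p0 ^ 2 <= F1 d p ^ 2) by (apply pow_incr; lra).
  rewrite !F1_sq in Hsq.
  destruct Hf as [Hpos [H1 Hcon]].
  assert (E0 := decomp p0 (d - 1) eq_refl). assert (E1 := decomp p (d - 1) H1).
  replace (S (d - 1)) with d in E0, E1 by lia. rewrite E0, E1 in Hsq.
  assert (Heq := prodR_eq (tk p) (tk p0) 2 (d - 1)).
  assert (Ht : tk p k = tk p0 k).
  { apply Heq; auto; [|lia]. intros i Hi.
    destruct (tk_props p i H1 ltac:(lia) (Hpos i ltac:(lia))) as [A [B _]].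
    { intros ->. apply constr_iff with (d := d); [lia|]. apply Hcon; lia. }
    destruct (tk_props p0 i eq_refl ltac:(lia) (p0_pos i ltac:(lia))) as [_ [_ [_ C]]].
    { intros ->. rewrite p0_2, T_p0 by lia. simpl. lra. }
    rewrite C by (apply p0_cond; lia). lra. }
  destruct (tk_props p k H1 ltac:(lia) (Hpos k ltac:(lia))) as [_ [_ [C _]]].
  { intros ->. apply constr_iff with (d := d); [lia|]. apply Hcon; lia. }
  apply C. rewrite Ht.
  destruct (tk_props p0 k eq_refl ltac:(lia) (p0_pos k ltac:(lia))) as [_ [_ [_ C0]]].
  { intros ->. rewrite p0_2, T_p0 by lia. simpl. lra. }
  apply C0, p0_cond; lia.
Qed.


Lemma hder (P A c x : R) (d : nat) : (1 <= d)%nat -> 1 <= A -> 0 <= c ->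
  is_derive (fun t => t * P / sqrt (A + c * t ^ 2) ^ d) x
    (P / sqrt (A + c * x ^ 2) ^ d * (1 - INR d * c * x ^ 2 / (A + c * x ^ 2))).
Proof.
  intros Hd HA Hc.
  assert (HQ : 1 <= A + c * x ^ 2) by (assert (0 <= x^2) by apply pow2_ge_0; nra).
  auto_derive.
  - replace (A + c * (x * (x * 1))) with (A + c * x ^ 2) by ring.
    assert (0 < sqrt (A + c * x ^ 2)) by (apply sqrt_lt_R0; lra).
    split; [lra|split; [apply pow_nonzero; lra|auto]].
  - replace (A + c * (x * (x * 1))) with (A + c * x ^ 2) by ring.
    assert (HS : sqrt (A + c * x ^ 2) ^ 2 = A + c * x ^ 2) by (apply pow2_sqrt; lra).
    assert (HS0 : 0 < sqrt (A + c * x ^ 2)) by (apply sqrt_lt_R0; lra).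
    set (Q := A + c * x ^ 2) in *. set (Sq := sqrt Q) in *.
    rewrite <- HS.
    destruct d as [|d']; [lia|]. simpl pred. change (Sq ^ (S d')) with (Sq * Sq ^ d').
    assert (0 < Sq ^ d') by (apply pow_lt; lra).
    field. lra.
Qed.

Lemma upd_ne p j t i : i <> j -> upd p j t i = p i.
Proof. intro H; unfold upd. destruct (Nat.eqb_spec i j); [lia|auto]. Qed.
Lemma upd_eq p j t : upd p j t j = t.
Proof. unfold upd. rewrite Nat.eqb_refl. auto. Qed.

Lemma upd_prod p j t m k : (m <= j < m + k)%nat ->
  prodR (upd p j t) m k = t * prodR (upd p j 1) m k.
Proof.
  revert m; induction k as [|k IH]; intros m H; [lia|]. cbn [sumR prodR].
  destruct (Nat.eq_dec m j) as [->|Hne].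
  - rewrite !upd_eq. rewrite (prodR_ext (upd p j t) (upd p j 1)); [ring|].
    intros i Hi. rewrite !upd_ne by lia. auto.
  - rewrite !upd_ne by lia. rewrite IH by lia. ring.
Qed.

Lemma upd_sum (c : nat -> R) p j t m k : (m <= j < m + k)%nat ->
  sumR (fun i => c i * upd p j t i ^ 2) m k =
  sumR (fun i => c i * upd p j 0 i ^ 2) m k + c j * t ^ 2.
Proof.
  revert m; induction k as [|k IH]; intros m H; [lia|]. cbn [sumR prodR].
  destruct (Nat.eq_dec m j) as [->|Hne].
  - rewrite !upd_eq.
    rewrite (sumR_ext (fun i => c i * upd p j t i ^ 2) (fun i => c i * upd p j 0 i ^ 2)); [ring|].
    intros i Hi. rewrite !upd_ne by lia. auto.
  - rewrite !upd_ne by lia. rewrite IH by lia. ring.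
Qed.

Lemma upd_self p j : forall i, upd p j (p j) i = p i.
Proof. intro i. unfold upd. destruct (Nat.eqb_spec i j); subst; auto. Qed.

Lemma partial_F1 d p j : p 1%nat = 1 -> (2 <= j <= d)%nat ->
  partial (F1 d) j p =
  prodR (upd p j 1) 2 (d - 1) / sqrt (T p d) ^ d * (1 - INR d * w 1 j ^ 2 * p j ^ 2 / T p d).
Proof.
  intros H1 Hj. unfold partial.
  set (A := sumR (fun i => w 1 i ^ 2 * upd p j 0 i ^ 2) 1 d).
  set (P := prodR (upd p j 1) 2 (d - 1)).
  rewrite (Derive_ext _ (fun t => t * P / sqrt (A + w 1 j ^ 2 * t ^ 2) ^ d)).
  - assert (HA : 1 <= A).
    { unfold A. fold (T (upd p j 0) d). apply T_ge1; [|lia]. rewrite upd_ne by lia. auto. }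
    etransitivity; [apply is_derive_unique, (hder P A (w 1 j ^ 2) (p j) d ltac:(lia) HA (pow2_ge_0 _))|].
    assert (E : A + w 1 j ^ 2 * p j ^ 2 = T p d).
    { unfold A, T. symmetry.
      transitivity (sumR (fun i => w 1 i ^ 2 * upd p j (p j) i ^ 2) 1 d).
      - apply sumR_ext. intros. rewrite upd_self. auto.
      - apply (upd_sum (fun i => w 1 i ^ 2)); lia. }
    rewrite E. reflexivity.
  - intro t. unfold F1, Defs.D. rewrite upd_prod by lia.
    rewrite (upd_sum (fun i => w 1 i ^ 2)) by lia. reflexivity.
Qed.

Lemma partial_g2 d p j : (2 <= j <= d)%nat ->
  partial (fun q => Defs.D d 2 q ^ 2 - Defs.D d 1 q ^ 2) j p = 2 * p j * (w 2 j ^ 2 - w 1 j ^ 2).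
Proof.
  intros Hj. unfold partial.
  set (A2 := sumR (fun i => w 2 i ^ 2 * upd p j 0 i ^ 2) 1 d).
  set (A1 := sumR (fun i => w 1 i ^ 2 * upd p j 0 i ^ 2) 1 d).
  rewrite (Derive_ext _ (fun t => (A2 + w 2 j ^ 2 * t ^ 2) - (A1 + w 1 j ^ 2 * t ^ 2))).
  - apply is_derive_unique. auto_derive; auto. ring.
  - intro t. unfold Defs.D. rewrite !pow2_sqrt.
    + rewrite (upd_sum (fun i => w 2 i ^ 2)) by lia.
      rewrite (upd_sum (fun i => w 1 i ^ 2)) by lia. reflexivity.
    + apply sumR_nonneg; intros; apply Rmult_le_pos; apply pow2_ge_0.
    + apply sumR_nonneg; intros; apply Rmult_le_pos; apply pow2_ge_0.
Qed.


Theorem lemma5 (d : nat) (hd : (2 <= d)%nat) (pstar : nat -> R) :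
  is_maximizer d pstar ->
  exists mu : nat -> R, KKT d pstar mu /\
    exists k : nat, (2 <= k <= d)%nat /\ 0 < mu k.
Proof.
  intro Hmax. assert (Hc := all_cond d pstar hd Hmax).
  destruct Hmax as [[Hpos [H1 Hcon]] _].
  set (p := pstar) in *.
  destruct (star_vals p d H1 hd Hc) as [V2 V].
  assert (HT : forall n, (2 <= n <= d)%nat -> T p n = 2 * INR n / 3).
  { intros n Hn. apply T_vals; auto; [lia|]. intros; apply V; lia. }
  assert (HTd := HT d ltac:(lia)).
  assert (Hd1 : 2 <= INR d) by (apply (le_INR 2) in hd; simpl in hd; lra).
  assert (HP : forall j, (2 <= j <= d)%nat -> 0 < prodR (upd p j 1) 2 (d - 1)).
  { intros j Hj. apply prodR_pos. intros i Hi. unfold upd.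
    destruct (Nat.eqb_spec i j); [lra| apply Hpos; lia]. }
  assert (HS : 0 < sqrt (T p d) ^ d) by (apply pow_lt, sqrt_lt_R0; lra).
  assert (Hp2 : 0 < p 2%nat) by (apply Hpos; lia).
  set (m2 := partial (F1 d) 2 p / (6 * p 2%nat)).
  assert (HF2 : partial (F1 d) 2 p = prodR (upd p 2 1) 2 (d - 1) / sqrt (T p d) ^ d * (1/2)).
  { rewrite partial_F1 by (auto; lia). rewrite w_gt by lia. simpl INR.
    rewrite V2, HTd. f_equal. field. lra. }
  assert (Hm2 : 0 < m2).
  { unfold m2. rewrite HF2. apply Rdiv_lt_0_compat; [|lra].
    apply Rmult_lt_0_compat; [apply Rdiv_lt_0_compat; auto; apply HP; lia| lra]. }
  exists (fun i => if (i =? 2)%nat then m2 else 0). split.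
  2: { exists 2%nat. split; [lia|]. simpl. auto. }
  intros j Hj. split; [|split; [|split]].
  - replace (d - 1)%nat with (S (d - 2)) by lia. cbn [sumR].
    rewrite sumR_zero.
    2: { intros i Hi. destruct (Nat.eqb_spec i 2); [lia|]. ring. }
    simpl Nat.eqb. cbv iota. rewrite partial_g2 by auto.
    destruct (Nat.eq_dec j 2) as [->|Hne].
    + rewrite w_eq, (w_gt 1 2) by lia. unfold m2. simpl INR. field. lra.
    + rewrite (w_gt 2 j), (w_gt 1 j) by lia.
      rewrite partial_F1 by auto. rewrite w_gt by lia.
      assert (Z : 1 - INR d * INR (j - 1) ^ 2 * p j ^ 2 / T p d = 0).
      { rewrite Rmult_assoc, (V j ltac:(lia)), HTd. field. lra. }
      rewrite Z. ring.
  - destruct (Nat.eqb_spec j 2) as [->|]; [|ring].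
    rewrite Dj_sq, D1_sq by lia. rewrite (HT 2%nat ltac:(lia)), V2. simpl INR. field.
  - destruct (Nat.eqb_spec j 2); lra.
  - assert (Hc2 := Hcon j Hj).
    assert (0 <= Defs.D d j p) by (unfold Defs.D; apply sqrt_pos).
    assert (0 <= Defs.D d 1 p) by (unfold Defs.D; apply sqrt_pos).
    nra.
Qed.
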